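(* Let $n\ge 2$ be an integer and let $(x_0,y_0),\dots,(x_n,y_n)\in\mathbb{R}^2$ with $a:=x_0<x_1<\dots<x_n=:b$. For each $k\in\{1,\dots,n\}$ fix $d_k\in[0,1)$ and put \[ a_k=\frac{x_k-x_{k-1}}{x_n-x_0},\quad b_k=\frac{x_nx_{k-1}-x_0x_k}{x_n-x_0},\quad c_k=\frac{y_k-y_{k-1}}{x_n-x_0}-d_k\frac{y_n-y_0}{x_n-x_0},\quad e_k=\frac{x_ny_{k-1}-x_0y_k}{x_n-x_0}-d_k\frac{x_ny_0-x_0y_n}{x_n-x_0}, \] and $f_k(x,y)=(a_kx+b_k,\;c_kx+d_ky+e_k)$. Let $\theta=1$ if $c_1=\dots=c_n=0$ and $\theta=\dfrac{1-\max_k a_k}{2\max_k|c_k|}$ otherwise. Let $f:[a,b]\to\mathbb{R}$ be the affine fractal interpolation function associated with these data and $G_f=\{(x,f(x)):x\in[a,b]\}$. For $k\in\{1,\dots,n\}$ set \[ u_k=\frac{b_k}{1-a_k},\qquad v_k=\frac{b_kc_k}{(1-a_k)(1-d_k)}+\frac{e_k}{1-d_k},\qquad s_k=\max\{a_k+\theta|c_k|,\,d_k\}, \] and $M=\max_{i,j\in\{1,\dots,n\}}\left(|u_i-u_j|+\theta|v_i-v_j|\right)$. Let $\sigma$ be a permutation of $\{1,\dots,n\}$ with $s_{\sigma(1)}\le\dots\le s_{\sigma(n)}$, and let $D=1-s_{\sigma(n-1)}s_{\sigma(n)}$. Define \[ A=\min\left\{\min_{1\le j\le n-1}\left(v_{\sigma(j)}-\frac{Ms_{\sigma(j)}(1+s_{\sigma(n)})}{\theta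 D}\right),\ v_{\sigma(n)}-\frac{Ms_{\sigma(n)}(1+s_{\sigma(n-1)})}{\theta D}\right\}, \] \[ B=\max\left\{\max_{1\le j\le n-1}\left(v_{\sigma(j)}+\frac{Ms_{\sigma(j)}(1+s_{\sigma(n)})}{\theta D}\right),\ v_{\sigma(n)}+\frac{Ms_{\sigma(n)}(1+s_{\sigma(n-1)})}{\theta D}\right\}. \] Then $G_f\subseteq[a,b]\times[A,B]$.
   Context: The maps $f_k$ are contractions for the metric $\rho((u_1,v_1),(u_2,v_2))=|u_1-u_2|+\theta|v_1-v_2|$ on $\mathbb{R}^2$, and the attractor of the iterated function system $\{f_1,\dots,f_n\}$ is the unique nonempty compact set $K\subseteq\mathbb{R}^2$ with $K=\bigcup_{k=1}^n f_k(K)$. The affine fractal interpolation function is the continuous function $f:[a,b]\to\mathbb{R}$ with $f(x_k)=y_k$ for all $k\in\{0,\dots,n\}$ whose graph equals this attractor. *)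

(* Defs.v *)
From HB Require Import structures.
From mathcomp Require Import all_boot all_order all_algebra.
From mathcomp Require Import all_classical all_reals all_analysis.
Set Implicit Arguments. Unset Strict Implicit. Unset Printing Implicit Defensive.
Import Order.TTheory GRing.Theory Num.Theory numFieldNormedType.Exports.
Local Open Scope ring_scope.
Local Open Scope classical_set_scope.

(* Data: interpolation points (x k, y k), k = 0..n, vertical scalings d k,
   k = 1..n.  Map indices range over 1..n (natural numbers). *)

Definition ak (R : realType) (n : nat) (x : nat -> R) (k : nat) : R :=
  (x k - x k.-1) / (x n - x 0).
Definition bk (R : realType) (n : nat) (x : nat -> R) (k : nat) : R :=
  (x n * x k.-1 - x 0 * x k) / (x n - x 0).
Definition ck (R : realType) (n : nat) (x y d : nat -> R) (k : nat) : R :=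
  (y k - y k.-1) / (x n - x 0) - d k * ((y n - y 0) / (x n - x 0)).
Definition ek (R : realType) (n : nat) (x y d : nat -> R) (k : nat) : R :=
  (x n * y k.-1 - x 0 * y k) / (x n - x 0)
  - d k * ((x n * y 0 - x 0 * y n) / (x n - x 0)).

Definition fmap (R : realType) (n : nat) (x y d : nat -> R) (k : nat)
  (p : R * R) : R * R :=
  (ak n x k * p.1 + bk n x k, ck n x y d k * p.1 + d k * p.2 + ek n x y d k).

Definition theta (R : realType) (n : nat) (x y d : nat -> R) : R :=
  if [forall k : 'I_n, ck n x y d k.+1 == 0] then 1
  else (1 - \big[Num.max/ak n x 1]_(k < n) ak n x k.+1)
       / (2 * \big[Num.max/0]_(k < n) `|ck n x y d k.+1|).

Definition uk (R : realType) (n : nat) (x : nat -> R) (k : nat) : R :=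
  bk n x k / (1 - ak n x k).
Definition vk (R : realType) (n : nat) (x y d : nat -> R) (k : nat) : R :=
  bk n x k * ck n x y d k / ((1 - ak n x k) * (1 - d k))
  + ek n x y d k / (1 - d k).
Definition sk (R : realType) (n : nat) (x y d : nat -> R) (k : nat) : R :=
  Num.max (ak n x k + theta n x y d * `|ck n x y d k|) (d k).

Definition Mconst (R : realType) (n : nat) (x y d : nat -> R) : R :=
  \big[Num.max/0]_(i < n) \big[Num.max/0]_(j < n)
    (`|uk n x i.+1 - uk n x j.+1|
     + theta n x y d * `|vk n x y d i.+1 - vk n x y d j.+1|).

Definition Dconst (R : realType) (n : nat) (x y d : nat -> R)
  (sigma : nat -> nat) : R :=
  1 - sk n x y d (sigma n.-1) * sk n x y d (sigma n).

Definition rad_j (R : realType) (n : nat) (x y d : nat -> R)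
  (sigma : nat -> nat) (j : nat) : R :=
  Mconst n x y d * sk n x y d (sigma j) * (1 + sk n x y d (sigma n))
  / (theta n x y d * Dconst n x y d sigma).
Definition rad_n (R : realType) (n : nat) (x y d : nat -> R)
  (sigma : nat -> nat) : R :=
  Mconst n x y d * sk n x y d (sigma n) * (1 + sk n x y d (sigma n.-1))
  / (theta n x y d * Dconst n x y d sigma).

Definition Aconst (R : realType) (n : nat) (x y d : nat -> R)
  (sigma : nat -> nat) : R :=
  Num.min
    (\big[Num.min/ vk n x y d (sigma 1%N) - rad_j n x y d sigma 1%N]_(1 <= j < n)
        (vk n x y d (sigma j) - rad_j n x y d sigma j))
    (vk n x y d (sigma n) - rad_n n x y d sigma).
Definition Bconst (R : realType) (n : nat) (x y d : nat -> R)
  (sigma : nat -> nat) : R :=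
  Num.max
    (\big[Num.max/ vk n x y d (sigma 1%N) + rad_j n x y d sigma 1%N]_(1 <= j < n)
        (vk n x y d (sigma j) + rad_j n x y d sigma j))
    (vk n x y d (sigma n) + rad_n n x y d sigma).

Definition graph_on (R : realType) (a b : R) (f : R -> R) : set (R * R) :=
  [set p | exists2 t, a <= t <= b & p = (t, f t)].

(* attractor of the IFS {f_1,...,f_n}: nonempty compact K with
   K = \bigcup_{k=1}^n f_k(K) (unique by the contraction principle). *)
Definition is_attractor (R : realType) (n : nat) (x y d : nat -> R)
  (K : set (R * R)) : Prop :=
  K !=set0 /\ compact K /\
  K = \bigcup_(k in [set k : nat | (1 <= k <= n)%N]) (fmap n x y d k @` K).

Definition is_affine_FIF (R : realType) (n : nat) (x y d : nat -> R)
  (f : R -> R) : Prop :=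
  {within `[x 0%N, x n], continuous f} /\
  (forall k, (k <= n)%N -> f (x k) = y k) /\
  is_attractor n x y d (graph_on (x 0%N) (x n) f).

(* Main.v *)
Require Import Defs.
From HB Require Import structures.
From mathcomp Require Import all_boot all_order all_algebra.
From mathcomp Require Import all_classical all_reals all_analysis.
From mathcomp Require Import ring lra.
Import Order.TTheory GRing.Theory Num.Theory.
Local Open Scope ring_scope.
Local Open Scope classical_set_scope.

Lemma sigma_surj (n : nat) (sigma : nat -> nat) :
  (forall j, (1 <= j <= n)%N -> (1 <= sigma j <= n)%N) ->
  {in [pred j : nat | (1 <= j <= n)%N] &, injective sigma} ->
  forall k, (1 <= k <= n)%N -> exists2 j, (1 <= j <= n)%N & sigma j = k.
Proof.
move=> hr hi k hk.
have memI j : (j \in iota 1 n) = (1 <= j <= n)%N.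
  by rewrite mem_iota; case: j => [|j] //=; rewrite add1n ltnS.
have us : uniq (map sigma (iota 1 n)).
  rewrite map_inj_in_uniq ?iota_uniq // => i j; rewrite !memI => Hi Hj.
  by apply: hi.
have sub : {subset map sigma (iota 1 n) <= iota 1 n}.
  by move=> z /mapP [j]; rewrite memI => /hr hj ->; rewrite memI.
have hs : (size (iota 1 n) <= size (map sigma (iota 1 n)))%N by rewrite size_map.
have [_ eq] := uniq_min_size us sub hs.
have : k \in map sigma (iota 1 n) by rewrite eq memI.
by case/mapP => j; rewrite memI => hj ->; exists j.
Qed.

Lemma bigmin_seq_le (R : realType) (r : seq nat) (x0 : R) (F : nat -> R) j :
  j \in r -> \big[Num.min/x0]_(i <- r) F i <= F j.
Proof.
elim: r => [|a r IH] //=.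
rewrite in_cons big_cons => /orP [/eqP -> | /IH h].
  by rewrite ge_min lexx.
by rewrite ge_min h orbT.
Qed.

Lemma bigmax_seq_ge (R : realType) (r : seq nat) (x0 : R) (F : nat -> R) j :
  j \in r -> F j <= \big[Num.max/x0]_(i <- r) F i.
Proof.
elim: r => [|a r IH] //=.
rewrite in_cons big_cons => /orP [/eqP -> | /IH h].
  by rewrite le_max lexx.
by rewrite le_max h orbT.
Qed.

Lemma x_le (R : realType) (n : nat) (x : nat -> R) :
  (forall k, (k < n)%N -> x k < x k.+1) ->
  forall i j, (i <= j)%N -> (j <= n)%N -> x i <= x j.
Proof.
move=> hx i; elim=> [|j IH] hij hj.
  by rewrite leqn0 in hij; rewrite (eqP hij).
case: (ltngtP i j.+1) hij => // [hlt _|-> _].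
  apply: le_trans (IH _ _) (ltW (hx _ _)) => //; exact: ltnW.
by [].
Qed.

Lemma x_lt (R : realType) (n : nat) (x : nat -> R) :
  (forall k, (k < n)%N -> x k < x k.+1) ->
  forall i j, (i < j)%N -> (j <= n)%N -> x i < x j.
Proof.
move=> hx i j hij hj.
case: j hij hj => [//|j] hij hj.
apply: le_lt_trans (hx j hj).
exact: (@x_le _ _ _ hx) i j hij (ltnW hj).
Qed.

Lemma a_bounds (R : realType) (n : nat) (x : nat -> R) :
  (2 <= n)%N -> (forall k, (k < n)%N -> x k < x k.+1) ->
  forall k, (1 <= k <= n)%N -> 0 <= ak n x k /\ ak n x k < 1.
Proof.
move=> hn hx k /andP [hk1 hkn].
have h0n : x 0%N < x n by apply: (@x_lt _ _ _ hx) => //; apply: leq_trans hn.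
have hpos : 0 < x n - x 0%N by rewrite subr_gt0.
rewrite /ak; split.
  apply: divr_ge0; last exact: ltW.
  by rewrite subr_ge0; apply: (@x_le _ _ _ hx) => //; apply: leq_pred.
rewrite ltr_pdivrMr // mul1r.
case: k hk1 hkn => [//|[|k]] _ hkn /=.
  have : x 1%N < x n by apply: (@x_lt _ _ _ hx).
  lra.
have h1 : x 0%N < x k.+1 by apply: (@x_lt _ _ _ hx) => //; apply: leq_trans (ltnW hkn).
have h2 : x k.+2 <= x n by apply: (@x_le _ _ _ hx).
lra.
Qed.

Lemma theta_props (R : realType) (n : nat) (x y d : nat -> R) :
  (2 <= n)%N -> (forall k, (k < n)%N -> x k < x k.+1) ->
  0 < theta n x y d /\
  forall k, (1 <= k <= n)%N -> ak n x k + theta n x y d * `|ck n x y d k| < 1.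
Proof.
move=> hn hx.
have ha := @a_bounds _ _ _ hn hx.
rewrite /theta; case: ifP => [/forallP hc | /negbT /forallPn [k0 hk0]].
  split => // k /andP [hk1 hkn].
  have hk : (k.-1 < n)%N by rewrite prednK.
  have := hc (Ordinal hk); rewrite /= prednK // => /eqP ->.
  rewrite normr0 mulr0 addr0.
  by case: (ha k); [rewrite hk1 hkn | ].
set amax := \big[Num.max/ak n x 1]_(k < n) ak n x k.+1.
set cmax := \big[Num.max/0]_(k < n) `|ck n x y d k.+1|.
have hcm : 0 < cmax.
  apply: lt_le_trans (le_bigmax _ _ k0).
  by rewrite normr_gt0.
have ham : amax < 1.
  rewrite /amax; elim/big_ind: _ => //.
  - by case: (ha 1%N) => //; rewrite /= (leq_trans _ hn).
  - by move=> u v hu hv; rewrite gt_max hu hv.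
  - move=> i _; case: (ha i.+1) => //; by rewrite /= ltn_ord.
have hth : 0 < (1 - amax) / (2 * cmax).
  apply: divr_gt0; first lra.
  by apply: mulr_gt0.
split => // k /andP [hk1 hkn].
have hk : (k.-1 < n)%N by rewrite prednK.
have hak : ak n x k <= amax.
  by have := le_bigmax (ak n x 1) (fun i : 'I_n => ak n x i.+1) (Ordinal hk); rewrite /= prednK.
have hck : `|ck n x y d k| <= cmax.
  by have := le_bigmax 0 (fun i : 'I_n => `|ck n x y d i.+1|) (Ordinal hk); rewrite /= prednK.
have e : (1 - amax) / (2 * cmax) * `|ck n x y d k| <= (1 - amax) / (2 * cmax) * cmax.
  by apply: ler_wpM2l => //; apply: ltW.
have e2 : (1 - amax) / (2 * cmax) * cmax = (1 - amax) / 2.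
  by field; rewrite lt0r_neq0.
lra.
Qed.

Definition rho (R : realType) (th : R) (p q : R * R) : R :=
  `|p.1 - q.1| + th * `|p.2 - q.2|.
Definition Pk (R : realType) (n : nat) (x y d : nat -> R) (k : nat) : R * R :=
  (uk n x k, vk n x y d k).
Arguments rho {R}.
Arguments Pk {R}.

Lemma s_bounds (R : realType) (n : nat) (x y d : nat -> R) :
  (2 <= n)%N -> (forall k, (k < n)%N -> x k < x k.+1) ->
  (forall k, (1 <= k <= n)%N -> 0 <= d k < 1) ->
  forall k, (1 <= k <= n)%N -> 0 <= sk n x y d k /\ sk n x y d k < 1.
Proof.
move=> hn hx hd k hk.
have [ht hs] := @theta_props _ _ x y d hn hx.
have [ha0 ha1] := @a_bounds _ _ _ hn hx k hk.
have /andP [hd0 hd1] := hd k hk.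
have := hs k hk.
rewrite /sk; split.
  by rewrite le_max hd0 orbT.
by rewrite gt_max hd1 andbT.
Qed.

Lemma rho_ge0 (R : realType) (th : R) (p q : R * R) : 0 <= th -> 0 <= rho th p q.
Proof. by move=> h; rewrite /rho; apply: addr_ge0 => //; apply: mulr_ge0. Qed.

Lemma rho_tri (R : realType) (th : R) (p q r : R * R) : 0 <= th ->
  rho th p r <= rho th p q + rho th q r.
Proof.
move=> h; rewrite /rho.
have h1 := ler_distD q.1 p.1 r.1.
have h2 := ler_distD q.2 p.2 r.2.
have h3 : th * `|p.2 - r.2| <= th * (`|p.2 - q.2| + `|q.2 - r.2|) by apply: ler_wpM2l.
lra.
Qed.

Lemma rho_snd (R : realType) (th : R) (p q : R * R) : 0 <= th -> th * `|p.2 - q.2| <= rho th p q.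
Proof. by move=> h; rewrite /rho lerDr. Qed.

Lemma lip (R : realType) (n : nat) (x y d : nat -> R) k (p q : R * R) :
  0 <= theta n x y d -> 0 <= ak n x k -> 0 <= d k ->
  rho (theta n x y d) (Defs.fmap n x y d k p) (Defs.fmap n x y d k q)
  <= sk n x y d k * rho (theta n x y d) p q.
Proof.
move=> ht ha hd; rewrite /rho /fmap /=.
set th := theta n x y d; set a := ak n x k; set b := bk n x k.
set c := ck n x y d k; set e := ek n x y d k; set s := sk n x y d k.
have hs1 : a + th * `|c| <= s by rewrite /s /sk le_max lexx.
have hs2 : d k <= s by rewrite /s /sk le_max lexx orbT.
have E1 : a * p.1 + b - (a * q.1 + b) = a * (p.1 - q.1) by ring.
have E2 : c * p.1 + d k * p.2 + e - (c * q.1 + d k * q.2 + e)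
        = c * (p.1 - q.1) + d k * (p.2 - q.2) by ring.
rewrite E1 E2 normrM (ger0_norm ha).
set D1 := `|p.1 - q.1|; set D2 := `|p.2 - q.2|.
have hD1 : 0 <= D1 by exact: normr_ge0.
have hD2 : 0 <= D2 by exact: normr_ge0.
have t1 : `|c * (p.1 - q.1) + d k * (p.2 - q.2)| <= `|c| * D1 + d k * D2.
  apply: le_trans (ler_normD _ _) _.
  by rewrite !normrM (ger0_norm hd).
have t2 : th * `|c * (p.1 - q.1) + d k * (p.2 - q.2)| <= th * (`|c| * D1 + d k * D2).
  by apply: ler_wpM2l.
have t3 : (a + th * `|c|) * D1 <= s * D1 by apply: ler_wpM2r.
have t4 : (th * D2) * d k <= (th * D2) * s by apply: ler_wpM2l => //; apply: mulr_ge0.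
have E3 : th * (`|c| * D1 + d k * D2) = th * `|c| * D1 + th * D2 * d k by ring.
have E4 : s * (D1 + th * D2) = s * D1 + th * D2 * s by ring.
rewrite E4.
have E5 : (a + th * `|c|) * D1 = a * D1 + th * `|c| * D1 by ring.
apply: le_trans (lerD (lexx (a * D1)) t2) _.
by rewrite E3 addrA -E5; apply: lerD.
Qed.

Lemma fixpt (R : realType) (n : nat) (x y d : nat -> R) k :
  ak n x k != 1 -> d k != 1 ->
  Defs.fmap n x y d k (Pk n x y d k) = Pk n x y d k.
Proof.
move=> ha hd; rewrite /Defs.fmap /Pk /uk /vk /=.
have ha' : 1 - ak n x k != 0 by rewrite subr_eq0 eq_sym.
have hd' : 1 - d k != 0 by rewrite subr_eq0 eq_sym.
congr pair; field; rewrite ?ha' ?hd' //.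
Qed.

Lemma Mbound (R : realType) (n : nat) (x y d : nat -> R) l k :
  (1 <= l <= n)%N -> (1 <= k <= n)%N ->
  rho (theta n x y d) (Pk n x y d l) (Pk n x y d k) <= Mconst n x y d.
Proof.
move=> /andP [hl1 hln] /andP [hk1 hkn].
have hl : (l.-1 < n)%N by rewrite prednK.
have hk : (k.-1 < n)%N by rewrite prednK.
rewrite /Mconst.
apply: le_trans (le_bigmax _ _ (Ordinal hl)).
apply: le_trans (le_bigmax _ _ (Ordinal hk)) => /=.
by rewrite !prednK.
Qed.
Arguments rho_tri {R}. Arguments rho_ge0 {R}. Arguments rho_snd {R}.
Lemma arith1 (R : realType) (t' t M X Y : R) :
  0 <= t' -> t' <= t -> t < 1 -> 0 <= M -> 0 <= X -> 0 <= Y ->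
  X <= t * Num.max X (Y + M) -> Y <= t' * Num.max (X + M) (Y + M) ->
  X * (1 - t' * t) <= t * M * (1 + t') /\
  Num.max (X + M) (Y + M) * (1 - t' * t) <= M * (1 + t).
Proof.
move=> h0 h1 h2 hM hX hY.
have hX2 : X <= t * (Y + M) -> X <= t * Num.max X (Y + M) -> X <= t * (Y + M) by [].
have {}hX : X <= t * Num.max X (Y + M) -> X <= t * (Y + M).
  case: (leP X (Y + M)) => hc H //.
  have : X * (1 - t) <= 0 by nra.
  nra.
move=> /hX hX' {hX2}.
case: (leP (X + M) (Y + M)) => hc hYb.
- (* Y <= t'(Y+M) *)
  have e1 : Y * (1 - t') <= t' * M by nra.
  have e2 : X <= t * (Y + M) by [].
  have e3 : (Y + M) * (1 - t') <= M by nra.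
  have e4a : (Y + M) * (1 - t' * t) * (1 - t') <= M * (1 - t' * t).
    rewrite mulrAC; apply: ler_wpM2r => //; nra.
  have e4b : M * (1 - t' * t) <= M * (1 + t') * (1 - t').
    have hh : 0 <= M * (t' * (t - t')) by apply: mulr_ge0 => //; apply: mulr_ge0 => //; lra.
    have -> : M * (1 + t') * (1 - t') = M * (1 - t' * t) + M * (t' * (t - t')) by ring.
    lra.
  have e4 : (Y + M) * (1 - t' * t) * (1 - t') <= M * (1 + t') * (1 - t') := le_trans e4a e4b.
  have e5 : (Y + M) * (1 - t' * t) <= M * (1 + t').
    rewrite -(ler_pM2r (_ : 0 < 1 - t')) //; lra.
  have hD : 0 <= 1 - t' * t by nra.
  split.
    apply: (le_trans (ler_wpM2r hD hX')).
    have -> : t * (Y + M) * (1 - t' * t) = t * ((Y + M) * (1 - t' * t)) by ring.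
    have -> : t * M * (1 + t') = t * (M * (1 + t')) by ring.
    by apply: ler_wpM2l; [lra | ].
  apply: (le_trans e5); apply: ler_wpM2l => //; lra.
- have f1 : t * Y <= t * (t' * (X + M)) by apply: ler_wpM2l; lra.
  have f2 : X * (1 - t' * t) <= t * M * (1 + t').
    have e : t * (t' * (X + M)) = t' * t * X + t * t' * M by ring.
    rewrite e in f1.
    have -> : X * (1 - t' * t) = X - t' * t * X by ring.
    have -> : t * M * (1 + t') = t * M + t * t' * M by ring.
    lra.
  split => //.
  have -> : (X + M) * (1 - t' * t) = X * (1 - t' * t) + M - t' * t * M by ring.
  have e : t * M * (1 + t') = t * M + t * t' * M by ring.
  rewrite e in f2.
  have -> : M * (1 + t) = M + t * M by ring.
  have -> : t' * t * M = t * t' * M by ring.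
  lra.
Qed.

Lemma between_norm (R : realType) (a b t u : R) :
  a <= t -> t <= b -> `|t - u| <= `|a - u| + `|b - u|.
Proof.
move=> h1 h2.
have e1 := ler_norm (b - u).
have e2 := ler_norm (- (a - u)); rewrite normrN in e2.
have e3 := normr_ge0 (a - u).
have e4 := normr_ge0 (b - u).
rewrite ler_norml; apply/andP; split; lra.
Qed.

Theorem corollary3p1 (R : realType) (n : nat) (x y d : nat -> R)
  (sigma : nat -> nat) (f : R -> R) :
  (2 <= n)%N ->
  (forall k, (k < n)%N -> x k < x k.+1) ->
  (forall k, (1 <= k <= n)%N -> 0 <= d k < 1) ->
  (forall j, (1 <= j <= n)%N -> (1 <= sigma j <= n)%N) ->
  {in [pred j : nat | (1 <= j <= n)%N] &, injective sigma} ->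
  (forall i j, (1 <= i <= j)%N -> (j <= n)%N ->
     sk n x y d (sigma i) <= sk n x y d (sigma j)) ->
  is_affine_FIF n x y d f ->
  graph_on (x 0%N) (x n) f `<=`
    [set p | x 0%N <= p.1 <= x n /\
             Aconst n x y d sigma <= p.2 <= Bconst n x y d sigma].
Proof.
move=> hn hx hd hsr hsi hmono [hcont [hinterp [[p0 Kp0] [hcomp hK]]]].
set K := graph_on (x 0%N) (x n) f in Kp0 hK *.
set th := theta n x y d.
have [hth hthk] := @theta_props _ _ x y d hn hx.
have ht0 : 0 <= th := ltW hth.
set M := Mconst n x y d.
set P := Pk n x y d.
have hsb := @s_bounds _ _ x y d hn hx hd.
have hab := @a_bounds _ _ _ hn hx.
have hn1 : (1 <= n)%N by apply: leq_trans hn.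
have hfix k : (1 <= k <= n)%N -> Defs.fmap n x y d k (P k) = P k.
  move=> hk; apply: fixpt.
    by case: (hab k hk) => _ h; rewrite lt_eqF.
  by case/andP: (hd k hk) => _ h; rewrite lt_eqF.
have hlip k : (1 <= k <= n)%N -> forall p q,
    rho th (Defs.fmap n x y d k p) (Defs.fmap n x y d k q) <= sk n x y d k * rho th p q.
  move=> hk p q; apply: lip => //.
    by case: (hab k hk).
  by case/andP: (hd k hk).
have hMb l k : (1 <= l <= n)%N -> (1 <= k <= n)%N -> rho th (P l) (P k) <= M.
  exact: Mbound.
have h11 : (1 <= 1 <= n)%N by rewrite leqnn hn1.
have hM0 : 0 <= M by apply: le_trans (hMb 1%N 1%N h11 h11); apply: rho_ge0.
have hKdec p : K p -> exists k, (1 <= k <= n)%N /\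
    exists2 q, K q & p = Defs.fmap n x y d k q.
  move=> Kp.
  have : (\bigcup_(k in [set k : nat | (1 <= k <= n)%N]) (Defs.fmap n x y d k @` K)) p.
    by rewrite -hK.
  case=> k /= hk [q Kq <-]; exists k; split => //; by exists q.
have hKcl k q : (1 <= k <= n)%N -> K q -> K (Defs.fmap n x y d k q).
  by move=> hk Kq; rewrite hK; exists k => //; exists q.
have hx0n : x 0%N <= x n by apply: (@x_le _ _ _ hx).
have [c2 _ hc2] := EVT_max hx0n hcont.
have [c1 _ hc1] := EVT_min hx0n hcont.
set C := `|x 0%N - (P 1%N).1| + `|x n - (P 1%N).1|
         + th * (`|f c1 - (P 1%N).2| + `|f c2 - (P 1%N).2|).
have hC0 : 0 <= C.
  rewrite /C; apply: addr_ge0; first by apply: addr_ge0.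
  by apply: mulr_ge0 => //; apply: addr_ge0.
have hbd1 p : K p -> rho th p (P 1%N) <= C.
  case=> t /andP [ht1 ht2] ->.
  have f1 : f c1 <= f t by apply: hc1; rewrite in_itv /= ht1 ht2.
  have f2 : f t <= f c2 by apply: hc2; rewrite in_itv /= ht1 ht2.
  rewrite /rho /C /=; apply: lerD; first exact: between_norm.
  by apply: ler_wpM2l => //; apply: between_norm.
have hbd k p : (1 <= k <= n)%N -> K p -> rho th p (P k) <= C + M.
  move=> hk Kp; apply: le_trans (rho_tri _ _ (P 1%N) _ ht0) _.
  by apply: lerD; [apply: hbd1 | apply: hMb].
set S := fun k => [set z | exists2 q, K q & z = rho th (Defs.fmap n x y d k q) (P k)].
have hSb k z : (1 <= k <= n)%N -> S k z -> z <= C + M.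
  by move=> hk [q Kq ->]; apply: hbd => //; apply: hKcl.
have hsn : (1 <= sigma n <= n)%N by apply: hsr; rewrite hn1 leqnn.
have hn1' : (1 <= n.-1 <= n)%N.
  by rewrite leq_pred andbT -ltnS prednK.
have hsn1 : (1 <= sigma n.-1 <= n)%N by apply: hsr.
set t := sk n x y d (sigma n).
set t' := sk n x y d (sigma n.-1).
set EX := [set z | S (sigma n) z \/ z = 0].
set EY := [set z | z = 0 \/ exists l, ((1 <= l <= n)%N && (l != sigma n)) /\ S l z].
have hCM : 0 <= C + M by apply: addr_ge0.
have hubX : has_ubound EX.
  exists (C + M) => z [hz | ->] //; exact: hSb hz.
have hubY : has_ubound EY.
  exists (C + M) => z [-> | [l [/andP [hl _] hz]]] //; exact: hSb hz.
set X := sup EX.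
set Y := sup EY.
have hXub z : EX z -> z <= X by move=> hz; apply: ub_le_sup.
have hYub z : EY z -> z <= Y by move=> hz; apply: ub_le_sup.
have hX0 : 0 <= X by apply: hXub; right.
have hY0 : 0 <= Y by apply: hYub; left.
have hrl l q : (1 <= l <= n)%N -> K q ->
    rho th (Defs.fmap n x y d l q) (P l) <= (if l == sigma n then X else Y).
  move=> hl Kq; case: eqP => [el | nel].
    by apply: hXub; left; rewrite -el; exists q.
  by apply: hYub; right; exists l; split; [rewrite hl; apply/eqP | exists q].
have key_gen k z : (1 <= k <= n)%N -> S k z ->
    z <= sk n x y d k * Num.max (X + M) (Y + M).
  move=> hk [q Kq ->].
  have [l [hl [q' Kq' ->]]] := hKdec q Kq.
  have := hlip k hk (Defs.fmap n x y d l q') (P k); rewrite hfix // => h.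
  apply: le_trans h _; apply: ler_wpM2l; first by case: (hsb k hk).
  apply: le_trans (rho_tri _ _ (P l) _ ht0) _.
  have := hrl l q' hl Kq'; have := hMb l k hl hk.
  case: (l == sigma n) => h1 h2.
    by rewrite le_max; apply/orP; left; apply: lerD.
  by rewrite le_max; apply/orP; right; apply: lerD.
have key_top z : S (sigma n) z -> z <= t * Num.max X (Y + M).
  move=> [q Kq ->].
  have [l [hl [q' Kq' ->]]] := hKdec q Kq.
  have := hlip _ hsn (Defs.fmap n x y d l q') (P (sigma n)); rewrite hfix // => h.
  apply: le_trans h _; apply: ler_wpM2l; first by case: (hsb _ hsn).
  have := hrl l q' hl Kq'.
  case: eqP => [-> h1 | nel h1].
    by rewrite le_max h1.
  apply: le_trans (rho_tri _ _ (P l) _ ht0) _.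
  by rewrite le_max; apply/orP; right; apply: lerD => //; apply: hMb.
have ht'0 : 0 <= t' by case: (hsb _ hsn1).
have ht1 : t < 1 by case: (hsb _ hsn).
have ht0' : 0 <= t by case: (hsb _ hsn).
have htt : t' <= t by apply: hmono => //; rewrite leq_pred.
have hX : X <= t * Num.max X (Y + M).
  apply: ge_sup; first by exists 0; right.
  move=> z [hz | ->]; first exact: key_top.
  apply: mulr_ge0 => //; rewrite le_max; apply/orP; right; exact: addr_ge0.
have hY : Y <= t' * Num.max (X + M) (Y + M).
  apply: ge_sup; first by exists 0; left.
  move=> z [-> | [l [/andP [hl hlne] hz]]].
    apply: mulr_ge0 => //; rewrite le_max; apply/orP; right; exact: addr_ge0.
  apply: le_trans (key_gen l z hl hz) _.
  apply: ler_wpM2r; first by rewrite le_max; apply/orP; right; exact: addr_ge0.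
  have [j hj ej] := @sigma_surj _ _ hsr hsi _ hl.
  rewrite -ej; apply: hmono; last by rewrite leq_pred.
  case/andP: hj => hj1 hjn; rewrite hj1 /=.
  rewrite -ltnS prednK //; rewrite ltn_neqAle hjn andbT.
  by apply: contra hlne => /eqP ejn; rewrite -ej ejn.
have [hXf hMf] := @arith1 _ _ _ _ _ _ ht'0 htt ht1 hM0 hX0 hY0 hX hY.
have hD : 0 < 1 - t' * t.
  have : t' * t <= t' * 1 by apply: ler_wpM2l => //; exact: ltW.
  have : t' < 1 by apply: le_lt_trans ht1.
  lra.
have hthD : 0 < th * (1 - t' * t) by apply: mulr_gt0.
move=> p Kp; split.
  by case: Kp => tt ht ->.
have [k [hk [q Kq ep]]] := hKdec p Kp.
have [j hj ejk] := @sigma_surj _ _ hsr hsi _ hk.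
have hz : S k (rho th p (P k)) by exists q => //; rewrite ep.
have hsnd := rho_snd _ p (P k) ht0.
suff [r [hr1 [hr2 hr3]]] : exists r, `|p.2 - vk n x y d k| <= r /\
    Aconst n x y d sigma <= vk n x y d k - r /\ vk n x y d k + r <= Bconst n x y d sigma.
  rewrite ler_distl in hr1; case/andP: hr1 => h1 h2.
  by rewrite (le_trans hr2 h1) (le_trans h2 hr3).
case: (eqVneq j n) => [ejn | nejn].
  rewrite ejn in ejk.
  exists (rad_n n x y d sigma); split; last first.
    rewrite /Aconst /Bconst -ejk; split.
      by rewrite ge_min lexx orbT.
    by rewrite le_max lexx orbT.
  rewrite /rad_n ler_pdivlMr // /Dconst -/t -/t' -/M.
  have e1 : rho th p (P k) <= X by apply: hXub; left; rewrite ejk; exact: hz.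
  have e2 : th * `|p.2 - vk n x y d k| * (1 - t' * t) <= X * (1 - t' * t).
    apply: ler_wpM2r; first exact: ltW.
    exact: le_trans hsnd e1.
  have e3 : `|p.2 - vk n x y d k| * (th * (1 - t' * t))
          = th * `|p.2 - vk n x y d k| * (1 - t' * t) by ring.
  rewrite e3; apply: le_trans e2 _; apply: le_trans hXf _.
  by rewrite (mulrC t M).
have hjn : (1 <= j < n)%N.
  by case/andP: hj => hj1 hjn; rewrite hj1 ltn_neqAle nejn hjn.
exists (rad_j n x y d sigma j); split; last first.
  have hmem : j \in index_iota 1 n by rewrite mem_index_iota.
  rewrite /Aconst /Bconst -ejk; split.
    rewrite ge_min; apply/orP; left.
    exact: (@bigmin_seq_le _ _ _ (fun j => vk n x y d (sigma j) - rad_j n x y d sigma j) _ hmem).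
  rewrite le_max; apply/orP; left.
  exact: (@bigmax_seq_ge _ _ _ (fun j => vk n x y d (sigma j) + rad_j n x y d sigma j) _ hmem).
rewrite /rad_j ler_pdivlMr // /Dconst -/t -/t' -/M ejk.
have e1 := key_gen k _ hk hz.
have hsk0 : 0 <= sk n x y d k by case: (hsb k hk).
have e2 : th * `|p.2 - vk n x y d k| * (1 - t' * t)
        <= sk n x y d k * Num.max (X + M) (Y + M) * (1 - t' * t).
  apply: ler_wpM2r; first exact: ltW.
  exact: le_trans hsnd e1.
have e3 : `|p.2 - vk n x y d k| * (th * (1 - t' * t))
        = th * `|p.2 - vk n x y d k| * (1 - t' * t) by ring.
rewrite e3; apply: le_trans e2 _.
rewrite -mulrA -(mulrA M) (mulrC M) -mulrA.
apply: ler_wpM2l => //.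
by rewrite mulrC.
Qed.
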